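(* Let $\mathbf{U}$ be a countable structure that has a universal homogeneous endomorphism. Then $\mathbf{U}$ is homogeneous if and only if $\mathbf{U}$ is homomorphism homogeneous.
   Context: An embedding is an injective homomorphism reflecting all relations. $\operatorname{Age}(\mathbf{U})$ is the class of finitely generated structures embeddable in $\mathbf{U}$, and $\overline{\operatorname{Age}(\mathbf{U})}$ is the class of countable structures all of whose finitely generated substructures embed into $\mathbf{U}$. A structure is homogeneous if every isomorphism between finitely generated substructures extends to an automorphism, and homomorphism homogeneous if every homomorphism between finitely generated substructures extends to an endomorphism. A universal homogeneous endomorphism of $\mathbf{U}$ is an endomorphism $u$ such that for every $\mathbf{A}\in\overline{\operatorname{Age}(\mathbf{U})}$ and homomorphism $h:\mathbf{A}\to\mathbf{U}$ there is an embedding $\iota:\mathbf{A}\hookrightarrow\mathbf{U}$ with $h=u\circ\iota$, and for every finitely generated $\mathbf{A}\le\mathbf{U}$ and embedding $\iota:\mathbf{A}\hookrightarrow\mathbf{U}$ with $u\circ\iota=u\restriction_A$ there is an automorphism $\alpha$ of $\mathbf{U}$ with $u\circ\alpha=u$ and $\alpha\restriction_A=\iota$. *)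

(* Defs.v *)
From mathcomp Require Import all_boot.
Set Implicit Arguments. Unset Strict Implicit. Unset Printing Implicit Defensive.

Record signature := Signature {
  fsym : Type; farity : fsym -> nat;
  rsym : Type; rarity : rsym -> nat }.

Record structure (S : signature) := Structure {
  carrier :> Type;
  fun_of : forall f : fsym S, ('I_(farity f) -> carrier) -> carrier;
  rel_of : forall r : rsym S, ('I_(rarity r) -> carrier) -> Prop }.

Arguments fun_of {S s} f _.
Arguments rel_of {S s} r _.

Section Defs.
Variable S : signature.

Definition countable (A : structure S) : Prop :=
  exists c : A -> nat, injective c.

Definition is_hom (A B : structure S) (h : A -> B) : Prop :=
  (forall f a, h (fun_of f a) = fun_of f (h \o a)) /\
  (forall r a, rel_of r a -> rel_of r (h \o a)).

Definition is_embedding (A B : structure S) (h : A -> B) : Prop :=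
  injective h /\
  (forall f a, h (fun_of f a) = fun_of f (h \o a)) /\
  (forall r a, rel_of r a <-> rel_of r (h \o a)).

Definition is_auto (A : structure S) (h : A -> A) : Prop :=
  is_embedding h /\ (forall y, exists x, h x = y).

Inductive generated (A : structure S) (X : A -> Prop) : A -> Prop :=
| gen_base x : X x -> generated X x
| gen_app f (a : 'I_(farity f) -> A) :
    (forall i, generated X (a i)) -> generated X (fun_of f a).

Definition fg_sub (A : structure S) (P : A -> Prop) : Prop :=
  exists n (g : 'I_n -> A),
    forall x, P x <-> generated (fun y => exists i, g i = y) x.

(* Maps defined on a substructure P of A (represented by total maps A -> B whose
   values outside P are irrelevant); P carries the induced structure. *)
Definition hom_on (A B : structure S) (P : A -> Prop) (h : A -> B) : Prop :=
  (forall f a, (forall i, P (a i)) -> h (fun_of f a) = fun_of f (h \o a)) /\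
  (forall r a, (forall i, P (a i)) -> rel_of r a -> rel_of r (h \o a)).

Definition emb_on (A B : structure S) (P : A -> Prop) (h : A -> B) : Prop :=
  (forall x y, P x -> P y -> h x = h y -> x = y) /\
  (forall f a, (forall i, P (a i)) -> h (fun_of f a) = fun_of f (h \o a)) /\
  (forall r a, (forall i, P (a i)) -> (rel_of r a <-> rel_of r (h \o a))).

Definition hom_between (U : structure S) (P Q : U -> Prop) (h : U -> U) : Prop :=
  hom_on P h /\ (forall x, P x -> Q (h x)).

Definition iso_between (U : structure S) (P Q : U -> Prop) (h : U -> U) : Prop :=
  emb_on P h /\ (forall x, P x -> Q (h x)) /\
  (forall y, Q y -> exists x, P x /\ h x = y).

Definition homogeneous (U : structure S) : Prop :=
  forall (P Q : U -> Prop) (h : U -> U), fg_sub P -> fg_sub Q ->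
    iso_between P Q h ->
    exists alpha : U -> U, is_auto alpha /\ (forall x, P x -> alpha x = h x).

Definition hom_homogeneous (U : structure S) : Prop :=
  forall (P Q : U -> Prop) (h : U -> U), fg_sub P -> fg_sub Q ->
    hom_between P Q h ->
    exists g : U -> U, is_hom g /\ (forall x, P x -> g x = h x).

Definition in_age_closure (U A : structure S) : Prop :=
  countable A /\
  (forall P : A -> Prop, fg_sub P -> exists e : A -> U, emb_on P e).

Definition universal_homogeneous_endo (U : structure S) (u : U -> U) : Prop :=
  is_hom u /\
  (forall (A : structure S), in_age_closure U A ->
     forall h : A -> U, is_hom h ->
       exists iota : A -> U, is_embedding iota /\ (forall x, h x = u (iota x))) /\
  (forall P : U -> Prop, fg_sub P ->
     forall iota : U -> U, emb_on P iota -> (forall x, P x -> u (iota x) = u x) ->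
       exists alpha : U -> U, is_auto alpha /\ (forall x, u (alpha x) = u x) /\
         (forall x, P x -> alpha x = iota x)).

End Defs.

(* Main.v *)
Require Import Defs.
From mathcomp Require Import all_boot.
From Stdlib Require Import ClassicalEpsilon ProofIrrelevance FunctionalExtensionality Classical.

Set Implicit Arguments. Unset Strict Implicit. Unset Printing Implicit Defensive.

Section Helpers.
Variable S : signature.

Definition img (U : structure S) (P : U -> Prop) (k : U -> U) : U -> Prop :=
  fun y => exists x, P x /\ k x = y.

Lemma gen_ext (U : structure S) (X Y : U -> Prop) :
  (forall x, X x -> Y x) -> forall x, generated X x -> generated Y x.
Proof.
move=> H x; elim=> [y Hy|f a _ IH]; [apply: gen_base; auto | apply: gen_app; auto].
Qed.

Lemma fg_closed (U : structure S) (P : U -> Prop) : fg_sub P ->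
  forall f (a : 'I_(farity f) -> U), (forall i, P (a i)) -> P (fun_of f a).
Proof.
move=> [n [g Hg]] f a Ha; apply/Hg; apply: gen_app => i; by apply/Hg.
Qed.

Lemma fg_ext (U : structure S) (P Q : U -> Prop) :
  (forall x, P x <-> Q x) -> fg_sub P -> fg_sub Q.
Proof.
move=> E [n [g Hg]]; exists n, g => x; split => H; [apply/Hg/E | apply/E/Hg]; done.
Qed.

Lemma img_gen (U : structure S) (X P : U -> Prop) (k : U -> U) :
  (forall y, generated X y -> P y) ->
  (forall f a, (forall i, P (a i)) -> k (fun_of f a) = fun_of f (k \o a)) ->
  forall y, img (generated X) k y <-> generated (img X k) y.
Proof.
move=> HP Hk y; split.
- move=> [x [Hx <-]]; elim: Hx => [z Hz | f a Ha IH].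
  + apply: gen_base; by exists z.
  + rewrite Hk; last by move=> i; apply: HP; apply: Ha.
    apply: gen_app => i; exact: IH.
- elim=> [z [x [Hx <-]] | f a Ha IH].
  + exists x; split=> //; exact: gen_base.
  + pose b i := proj1_sig (constructive_indefinite_description _ (IH i)).
    have Hb i : generated X (b i) /\ k (b i) = a i :=
      proj2_sig (constructive_indefinite_description _ (IH i)).
    exists (fun_of f b); split; first by apply: gen_app => i; case: (Hb i).
    rewrite Hk; last by move=> i; apply: HP; case: (Hb i).
    congr (fun_of f _); apply: functional_extensionality => i /=; by case: (Hb i).
Qed.

Lemma fg_img (U : structure S) (P : U -> Prop) (k : U -> U) : fg_sub P ->
  (forall f a, (forall i, P (a i)) -> k (fun_of f a) = fun_of f (k \o a)) ->
  fg_sub (img P k).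
Proof.
move=> [n [g Hg]] Hk; exists n, (k \o g) => y.
have HP : forall y, generated (fun y => exists i, g i = y) y -> P y by move=> z /Hg.
have E := img_gen HP Hk y.
have E1 : img P k y <-> img (generated (fun y => exists i, g i = y)) k y.
  split; move=> [x [Hx <-]]; exists x; split=> //; by apply/Hg.
have E2 : forall z, generated (img (fun y => exists i, g i = y) k) z <->
   generated (fun y => exists i, (k \o g) i = y) z.
  move=> z; split; apply: gen_ext.
  - move=> w [x [[i <-] <-]]; by exists i.
  - move=> w [i <-]; exists (g i); split=> //; by exists i.
have := E2 y; tauto.
Qed.

Definition pinv (U : structure S) (P : U -> Prop) (h : U -> U) (y : U) : U :=
  match excluded_middle_informative (exists x, P x /\ h x = y) with
  | left H => proj1_sig (constructive_indefinite_description _ H)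
  | right _ => y end.

Lemma pinv_spec (U : structure S) (P : U -> Prop) (h : U -> U) y :
  img P h y -> P (pinv P h y) /\ h (pinv P h y) = y.
Proof.
move=> Hy; rewrite /pinv; case: excluded_middle_informative => [H|H]; last by [].
exact: (proj2_sig (constructive_indefinite_description _ H)).
Qed.

Lemma pinvK (U : structure S) (P : U -> Prop) (h : U -> U) x :
  (forall x y, P x -> P y -> h x = h y -> x = y) -> P x -> pinv P h (h x) = x.
Proof.
move=> Hi Px; have [H1 H2] := pinv_spec (y := h x) (ex_intro _ x (conj Px erefl)).
exact: Hi.
Qed.

Lemma hom_comp (A B C : structure S) (f : A -> B) (g : B -> C) :
  is_hom f -> is_hom g -> is_hom (g \o f).
Proof.
move=> [Hf1 Hf2] [Hg1 Hg2]; split.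
- move=> F a /=; by rewrite Hf1 Hg1.
- move=> r a H; exact: Hg2 _ _ (Hf2 _ _ H).
Qed.

Lemma emb_hom (A B : structure S) (f : A -> B) : is_embedding f -> is_hom f.
Proof. move=> [_ [H1 H2]]; split => // r a; by move/H2. Qed.

Lemma emb_comp (A B C : structure S) (f : A -> B) (g : B -> C) :
  is_embedding f -> is_embedding g -> is_embedding (g \o f).
Proof.
move=> [Hf0 [Hf1 Hf2]] [Hg0 [Hg1 Hg2]]; split; last split.
- by move=> x y /Hg0 /Hf0.
- move=> F a /=; by rewrite Hf1 Hg1.
- move=> r a; have := Hf2 r a; have := Hg2 r (f \o a); tauto.
Qed.

Lemma emb_on_of (A B : structure S) (P : A -> Prop) (f : A -> B) :
  is_embedding f -> emb_on P f.
Proof.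
move=> [H0 [H1 H2]]; split; last split; auto.
Qed.

Lemma age_self (U : structure S) : countable U -> in_age_closure U U.
Proof.
move=> cU; split=> // P _; exists id; split; last split => //.
move=> f a _ /=; done.
Qed.

End Helpers.

Section BF.
Variable S : signature.
Variable U : structure S.
Variable u : U -> U.
Hypothesis Hu : universal_homogeneous_endo u.
Hypothesis HH : hom_homogeneous U.
Hypothesis cU : countable U.

Lemma ext_emb (P : U -> Prop) (h : U -> U) :
  fg_sub P -> emb_on P h -> fg_sub (img P h) ->
  exists e, is_embedding e /\ forall p, P p -> e p = h p.
Proof.
move=> fgP Hemb fgQ.
have Hhom : hom_between P (img P h) h.
  case: Hemb => _ [Hf Hr]; split; first by split => // r a Ha Hra; exact: (proj1 (Hr r a Ha) Hra).
  move=> x Px; by exists x.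
have [g [Hg Hgh]] := HH fgP fgQ Hhom.
have [Hu1 [Hu2 Hu3]] := Hu.
have [io [Hio Hiou]] := Hu2 U (age_self cU) (u \o g) (hom_comp Hg Hu1).
have [Hio0 [Hio1 Hio2]] := Hio.
have Hinj : forall x y, (fun _ => True) x -> (fun _ => True) y -> io x = io y -> x = y.
  by move=> x y _ _ /Hio0.
pose li := pinv (fun _ : U => True) io.
have liK : forall x, li (io x) = x by move=> x; apply: pinvK.
pose j := fun y => h (li y).
have [Hh0 [Hh1 Hh2]] := Hemb.
have fgP0 : fg_sub (img P io) by apply: fg_img => // f a _; apply: Hio1.
have Hj : emb_on (img P io) j.
  split; last split.
  - move=> y1 y2 [p1 [Hp1 <-]] [p2 [Hp2 <-]]; rewrite /j !liK => E.
    by congr io; apply: Hh0.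
  - move=> f a Ha; pose b := li \o a.
    have Hab : forall i, io (b i) = a i /\ P (b i).
      move=> i; rewrite /b /=; case: (Ha i) => p [Hp <-]; by rewrite liK.
    have ea : a = io \o b.
      apply: functional_extensionality => i; by case: (Hab i).
    rewrite ea /j -Hio1 liK Hh1; last by move=> i; case: (Hab i).
    congr (fun_of f _); apply: functional_extensionality => i /=; by rewrite liK.
  - move=> r a Ha; pose b := li \o a.
    have Hab : forall i, io (b i) = a i /\ P (b i).
      move=> i; rewrite /b /=; case: (Ha i) => p [Hp <-]; by rewrite liK.
    have ea : a = io \o b.
      apply: functional_extensionality => i; by case: (Hab i).
    have e3 : j \o (io \o b) = h \o b.
      apply: functional_extensionality => i /=; by rewrite /j liK.
    rewrite ea e3.
    have e1 := Hio2 r b.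
    have e2 := Hh2 r b (fun i => proj2 (Hab i)).
    tauto.
have Hju : forall x, img P io x -> u (j x) = u x.
  move=> x [p [Hp <-]]; rewrite /j liK -Hgh //; exact: Hiou p.
have [al [Hal [Halu Halj]]] := Hu3 _ fgP0 j Hj Hju.
exists (al \o io); split; first exact: emb_comp Hio Hal.1.
move=> p Hp /=; rewrite Halj; last by exists p.
by rewrite /j liK.
Qed.

Definition state := ((U -> Prop) * (U -> U))%type.
Definition good (s : state) := fg_sub s.1 /\ emb_on s.1 s.2 /\ fg_sub (img s.1 s.2).
Definition extends (s s' : state) :=
  (forall x, s.1 x -> s'.1 x) /\ (forall x, s.1 x -> s'.2 x = s.2 x).

Lemma extends_trans s1 s2 s3 : extends s1 s2 -> extends s2 s3 -> extends s1 s3.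
Proof.
move=> [A1 B1] [A2 B2]; split; first by auto.
move=> x Hx; rewrite B2; auto.
Qed.

Lemma forth s x : good s -> exists s', good s' /\ extends s s' /\ s'.1 x.
Proof.
move=> [fgP [Hemb fgQ]].
have [e [He Heh]] := ext_emb fgP Hemb fgQ.
have [n [g Hg]] := fgP.
pose X := fun y => (exists i, g i = y) \/ y = x.
pose P' := generated X.
have fgP' : fg_sub P'.
  pose g' := fun i : 'I_n.+1 =>
    match unlift ord_max i with Some j => g j | None => x end.
  exists n.+1, g' => y; split; apply: gen_ext.
  - move=> z [[i <-]|->].
    + exists (lift ord_max i); by rewrite /g' liftK.
    + exists ord_max; by rewrite /g' unlift_none.
  - move=> z [i <-]; rewrite /g'; case: (unlift ord_max i) => [j|].
    + left; by exists j.
    + by right.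
exists (P', e); split; last split.
- split => //; split; first exact: emb_on_of.
  apply: fg_img => // f a _; exact: He.2.1.
- split => p Hp /=; last exact: Heh.
  apply: gen_ext (proj1 (Hg p) Hp) => z Hz; by left.
- apply: gen_base; by right.
Qed.

Definition inv (s : state) : state := (img s.1 s.2, pinv s.1 s.2).

Lemma inv_good s : good s -> good (inv s).
Proof.
move=> [fgP [[Hh0 [Hh1 Hh2]] fgQ]].
have K : forall p, s.1 p -> pinv s.1 s.2 (s.2 p) = p by move=> p; apply: pinvK.
rewrite /inv /=; split => //; split.
- split; last split; rewrite /=.
  + move=> y1 y2 [p1 [Hp1 <-]] [p2 [Hp2 <-]]; rewrite !K //; by move->.
  + move=> f a Ha; pose b := pinv s.1 s.2 \o a.
    have Hab : forall i, s.2 (b i) = a i /\ s.1 (b i).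
      move=> i; rewrite /b /=; case: (Ha i) => p [Hp <-]; by rewrite K.
    have ea : a = s.2 \o b.
      apply: functional_extensionality => i; by case: (Hab i).
    rewrite ea -Hh1; last by move=> i; case: (Hab i).
    rewrite K; last by apply: fg_closed => // i; case: (Hab i).
    congr (fun_of f _); apply: functional_extensionality => i /=; rewrite K //.
    by case: (Hab i).
  + move=> r a Ha; pose b := pinv s.1 s.2 \o a.
    have Hab : forall i, s.2 (b i) = a i /\ s.1 (b i).
      move=> i; rewrite /b /=; case: (Ha i) => p [Hp <-]; by rewrite K.
    have ea : a = s.2 \o b.
      apply: functional_extensionality => i; by case: (Hab i).
    have e3 : pinv s.1 s.2 \o (s.2 \o b) = b.
      apply: functional_extensionality => i /=; rewrite K //; by case: (Hab i).
    rewrite ea e3.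
    have e2 := Hh2 r b (fun i => proj2 (Hab i)).
    tauto.
- rewrite /=; apply: (fg_ext _ fgP) => z; split.
  + move=> Hz; exists (s.2 z); split; [by exists z | by rewrite K].
  + move=> [y [[p [Hp <-]] <-]]; by rewrite K.
Qed.

Lemma back s y : good s -> exists s', good s' /\ extends s s' /\ img s'.1 s'.2 y.
Proof.
move=> Hs; have Hs1 := inv_good Hs.
have [[Q' k] [Hs2 [[Ex1 Ex2] Hy]]] := forth y Hs1.
have Hinj := (proj1 (proj1 (proj2 Hs2))).
simpl in *.
have [fgP [[Hh0 _] _]] := Hs.
have K : forall p, s.1 p -> pinv s.1 s.2 (s.2 p) = p by move=> p; apply: pinvK.
exists (inv (Q', k)); split; first exact: inv_good.
split; last first.
- exists (k y); split; first by exists y.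
  rewrite /= pinvK //.
split => p Hp /=.
- have Q'hp : Q' (s.2 p) by apply: Ex1; exists p.
  exists (s.2 p); split => //; rewrite Ex2; last by exists p.
  by rewrite K.
- have Q'hp : Q' (s.2 p) by apply: Ex1; exists p.
  have E : k (s.2 p) = p by rewrite Ex2 ?K //; exists p.
  by rewrite -{1}E pinvK.
Qed.

Lemma step s x : good s -> exists s', good s' /\ extends s s' /\ s'.1 x /\ img s'.1 s'.2 x.
Proof.
move=> Hs; have [s1 [G1 [E1 X1]]] := forth x Hs.
have [s2 [G2 [E2 X2]]] := back x G1.
exists s2; split => //; split; first exact: extends_trans E1 E2.
split => //; exact: E2.1.
Qed.

End BF.

Section Seq.
Variable S : signature.
Variable U : structure S.
Variable u : U -> U.
Hypothesis Hu : universal_homogeneous_endo u.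
Hypothesis HH : hom_homogeneous U.
Variable c : U -> nat.
Hypothesis Hc : injective c.

Let cU : countable U := ex_intro _ c Hc.

Lemma step' (s : state U) x : exists s', good s ->
  good s' /\ extends s s' /\ s'.1 x /\ img s'.1 s'.2 x.
Proof.
case: (classic (good s)) => G.
- have [s' H] := step Hu HH cU x G; by exists s'.
- by exists s.
Qed.

Definition Fs (s : state U) x := proj1_sig (constructive_indefinite_description _ (step' s x)).

Lemma Fs_spec s x : good s ->
  good (Fs s x) /\ extends s (Fs s x) /\ (Fs s x).1 x /\ img (Fs s x).1 (Fs s x).2 x.
Proof. exact: (proj2_sig (constructive_indefinite_description _ (step' s x))). Qed.

Variable s0 : state U.
Hypothesis G0 : good s0.

Fixpoint sq n : state U :=
  match n with
  | 0 => s0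
  | n'.+1 => match excluded_middle_informative (exists x, c x = n') with
             | left H => Fs (sq n') (proj1_sig (constructive_indefinite_description _ H))
             | right _ => sq n' end
  end.

Lemma extends_refl (s : state U) : extends s s.
Proof. by split. Qed.

Lemma sq_good_ext n : good (sq n) /\ extends (sq n) (sq n.+1).
Proof.
elim: n => [|n [Gn _]].
- rewrite /=; case: excluded_middle_informative => [H|H]; split => //;
    try exact: extends_refl; by have [? [? ?]] := Fs_spec (proj1_sig (constructive_indefinite_description _ H)) G0.
- have Gn1 : good (sq n.+1).
    rewrite /=; case: excluded_middle_informative => [H|H] //.
    by have [? ?] := Fs_spec (proj1_sig (constructive_indefinite_description _ H)) Gn.
  split => //.
  rewrite [sq n.+2]/=; case: excluded_middle_informative => [H|H]; last exact: extends_refl.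
  by have [? [? ?]] := Fs_spec (proj1_sig (constructive_indefinite_description _ H)) Gn1.
Qed.

Lemma sq_mono m n : m <= n -> extends (sq m) (sq n).
Proof.
move=> Hmn; rewrite -(subnKC Hmn); elim: (n - m) => [|k IH].
- by rewrite addn0; exact: extends_refl.
- rewrite addnS; apply: extends_trans IH (proj2 (sq_good_ext _)).
Qed.

Lemma sq_x x : (sq (c x).+1).1 x /\ img (sq (c x).+1).1 (sq (c x).+1).2 x.
Proof.
rewrite /=; case: excluded_middle_informative => [H|H]; last by case: H; exists x.
set y := proj1_sig _.
have -> : y = x by apply: Hc; exact: (proj2_sig (constructive_indefinite_description _ H)).
by have [_ [_ ?]] := Fs_spec x (proj1 (sq_good_ext (c x))).
Qed.

Definition alpha x := (sq (c x).+1).2 x.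

Lemma agree M x : (sq M).1 x -> alpha x = (sq M).2 x.
Proof.
move=> HM; rewrite /alpha; case: (leqP (c x).+1 M) => H.
- by rewrite (proj2 (sq_mono H)) //; exact: (proj1 (sq_x x)).
- by rewrite (proj2 (sq_mono (ltnW H))).
Qed.

Lemma bound n (a : 'I_n -> U) : exists M, forall i, (sq M).1 (a i).
Proof.
exists (\max_i (c (a i)).+1) => i.
have [H _] := sq_mono (@leq_bigmax _ (fun i => (c (a i)).+1) i).
apply: H; exact: (proj1 (sq_x (a i))).
Qed.

Lemma alpha_auto : is_auto alpha.
Proof.
split; last first.
- move=> y; have [_ [x [Hx E]]] := sq_x y; exists x; by rewrite (agree Hx).
split; last split.
- move=> x y E; pose M := maxn (c x).+1 (c y).+1.
  have Hx : (sq M).1 x by apply: (proj1 (sq_mono (leq_maxl _ _))); exact: (proj1 (sq_x x)).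
  have Hy : (sq M).1 y by apply: (proj1 (sq_mono (leq_maxr _ _))); exact: (proj1 (sq_x y)).
  have [_ [[Hi _] _]] := proj1 (sq_good_ext M).
  apply: Hi => //; by rewrite -(agree Hx) -(agree Hy).
- move=> f a; have [M HM] := bound a.
  have [fgM [[_ [Hf _]] _]] := proj1 (sq_good_ext M).
  rewrite (agree (fg_closed fgM HM)) Hf //.
  congr (fun_of f _); apply: functional_extensionality => i /=; by rewrite (agree (HM i)).
- move=> r a; have [M HM] := bound a.
  have [fgM [[_ [_ Hr]] _]] := proj1 (sq_good_ext M).
  have -> : alpha \o a = (sq M).2 \o a.
    apply: functional_extensionality => i /=; by rewrite (agree (HM i)).
  exact: Hr.
Qed.

Lemma alpha_ext x : s0.1 x -> alpha x = s0.2 x.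
Proof.
move=> Hx; have H0 := sq_mono (leq0n (c x).+1).
rewrite /alpha (proj2 H0) //.
Qed.

End Seq.

Lemma hh_homog (S : signature) (U : structure S) (u : U -> U) :
  countable U -> universal_homogeneous_endo u -> hom_homogeneous U -> homogeneous U.
Proof.
move=> [c Hc] Hu HH P Q h fgP fgQ [Hemb [HPQ HQP]].
have G0 : good ((P, h) : state U).
  split => //; split => //.
  apply: (fg_ext _ fgQ) => y; split.
  - move=> /HQP [x [Px <-]]; by exists x.
  - move=> [x [Px <-]]; exact: HPQ.
exists (alpha Hu HH Hc (P, h)); split; first exact: alpha_auto.
move=> x Px; exact: (alpha_ext Hu HH Hc G0 Px).
Qed.

Section Sub.
Variable S : signature.

Definition closedP (U : structure S) (P : U -> Prop) :=
  forall f (a : 'I_(farity f) -> U), (forall i, P (a i)) -> P (fun_of f a).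

Definition substr (U : structure S) (P : U -> Prop) (HP : closedP P) : structure S :=
  @Structure S {x : U | P x}
    (fun f a => exist _ (fun_of f (fun i => proj1_sig (a i)))
                  (HP f _ (fun i => proj2_sig (a i))))
    (fun r a => rel_of r (fun i => proj1_sig (a i))).

Lemma sig_eq (U : Type) (P : U -> Prop) (x y : {x : U | P x}) :
  proj1_sig x = proj1_sig y -> x = y.
Proof.
case: x => x px; case: y => y py /= E; subst y; f_equal; apply: proof_irrelevance.
Qed.

Lemma homog_hh (U : structure S) (u : U -> U) :
  countable U -> universal_homogeneous_endo u -> homogeneous U -> hom_homogeneous U.
Proof.
move=> [c Hc] [Hu1 [Hu2 Hu3]] Hhom P Q h fgP fgQ [[Hh1 Hh2] HPQ].
have HP : closedP P by move=> f a Ha; apply: fg_closed.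
pose A := substr HP.
have Hage : in_age_closure U A.
  split.
  - exists (fun x : A => c (proj1_sig x)) => x y /Hc; exact: sig_eq.
  - move=> R _; exists (fun x : A => proj1_sig x); split; last split.
    + move=> x y _ _; exact: sig_eq.
    + by [].
    + by [].
pose h' := fun x : A => h (proj1_sig x).
have Hh' : is_hom h'.
  split.
  - move=> f a; rewrite /h' /=; apply: Hh1 => i; exact: (proj2_sig (a i)).
  - move=> r a Hr; rewrite /h'; apply: (Hh2 r (fun i => proj1_sig (a i))) => //.
    move=> i; exact: (proj2_sig (a i)).
have [io [[Hio0 [Hio1 Hio2]] Hiou]] := Hu2 A Hage h' Hh'.
pose k := fun x => match excluded_middle_informative (P x) with
                   | left p => io (exist _ x p) | right _ => x end.
have kE : forall x (p : P x), k x = io (exist _ x p).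
  move=> x p; rewrite /k; case: excluded_middle_informative => [p'|n]; last by [].
  by congr io; apply: sig_eq.
have Hk : emb_on P k.
  split; last split.
  - move=> x y Px Py; rewrite (kE x Px) (kE y Py) => /Hio0 E.
    exact: (f_equal (@proj1_sig _ _) E).
  - move=> f a Ha; pose b : 'I_(farity f) -> A := fun i => exist _ (a i) (Ha i).
    rewrite (kE _ (HP f a Ha)).
    have -> : exist P (fun_of f a) (HP f a Ha) = @fun_of S A f b by [].
    rewrite Hio1; congr (fun_of f _); apply: functional_extensionality => i /=.
    by rewrite (kE _ (Ha i)).
  - move=> r a Ha; pose b : 'I_(rarity r) -> A := fun i => exist _ (a i) (Ha i).
    have E1 : rel_of r a <-> @rel_of S A r b by [].
    have E2 : io \o b = k \o a.
      apply: functional_extensionality => i /=; by rewrite (kE _ (Ha i)).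
    have := Hio2 r b; rewrite E2; tauto.
have Hiso : iso_between P (img P k) k.
  split => //; split; first by move=> x Px; exists x.
  by move=> y [x [Px <-]]; exists x.
have fgQ' : fg_sub (img P k) by apply: fg_img => // f a Ha; exact: Hk.2.1.
have [al [[Hal _] Halk]] := Hhom P (img P k) k fgP fgQ' Hiso.
exists (u \o al); split; first exact: hom_comp (emb_hom Hal) Hu1.
move=> x Px /=; rewrite Halk // (kE x Px) -Hiou.
by [].
Qed.

End Sub.

Theorem proposition4p8 (S : signature) (U : structure S) :
  countable U ->
  (exists u : U -> U, universal_homogeneous_endo u) ->
  (homogeneous U <-> hom_homogeneous U).
Proof.
move=> cU [u Hu]; split.
- exact: homog_hh cU Hu.
- exact: hh_homog cU Hu.
Qed.
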